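(* Let $S_0,S_1,S_2\subseteq\{0,1,2\}^m$ be a meta-extendable collection of admissible sets, and let $T\subseteq\{0,1,2\}^r$ be admissible. Then \[T(S_0,S_1,S_2)=\bigcup_{t\in T} S_{t_1}\times\cdots\times S_{t_r}\subseteq\{0,1,2\}^{mr}\] is an admissible set.
   Context: A set $S\subseteq\{0,1,2\}^m$ is admissible if (1) for all distinct $s,s'\in S$ there are coordinates $i,j$ with $s_i=0\neq s'_i$ and $s_j\neq 0=s'_j$; and (2) for all distinct $s,s',s''\in S$ there is a coordinate $k$ such that the multiset $\{s_k,s'_k,s''_k\}$ equals $\{0,1,2\}$, $\{0,0,1\}$ or $\{0,0,2\}$. The weight of a vector is its number of nonzero coordinates. A collection $S_0,S_1,S_2\subseteq\{0,1,2\}^m$ of admissible sets is meta-extendable if: (1) for any $s\in S_0$ and $s'\in S_1\cup S_2$, the weight of $s$ is less than the weight of $s'$; (2) whenever $x,y\in S_0$ (not necessarily distinct) and $z\in S_1\cup S_2$, there is a coordinate $k$ with the multiset $\{x_k,y_k,z_k\}$ equal to $\{0,1,2\}$, $\{0,0,1\}$ or $\{0,0,2\}$; (3) whenever $x\in S_0$, $y\in S_1$, $z\in S_2$, there is a coordinate $k$ with the multiset $\{x_k,y_k,z_k\}$ equal to $\{0,1,2\}$, $\{0,0,1\}$ or $\{0,0,2\}$. Products $S_{t_1}\times\cdots\times S_{t_r}$ consist of concatenations of vectors. *)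

(* Defs.v *)
From mathcomp Require Import all_boot.
Set Implicit Arguments. Unset Strict Implicit. Unset Printing Implicit Defensive.

Definition vec (m : nat) := m.-tuple 'I_3.

Definition good3 (a b c : 'I_3) : bool :=
  let s := [:: nat_of_ord a; nat_of_ord b; nat_of_ord c] in
  perm_eq s [:: 0; 1; 2] || perm_eq s [:: 0; 0; 1] || perm_eq s [:: 0; 0; 2].

Definition separated3 m (x y z : vec m) : Prop :=
  exists k : 'I_m, good3 (tnth x k) (tnth y k) (tnth z k).

Definition admissible m (S : {set vec m}) : Prop :=
  (forall s s', s \in S -> s' \in S -> s != s' ->
     (exists i : 'I_m, (nat_of_ord (tnth s i) == 0) && (nat_of_ord (tnth s' i) != 0)) /\
     (exists j : 'I_m, (nat_of_ord (tnth s j) != 0) && (nat_of_ord (tnth s' j) == 0))) /\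
  (forall s s' s'', s \in S -> s' \in S -> s'' \in S ->
     s != s' -> s != s'' -> s' != s'' -> separated3 s s' s'').

Definition weight m (s : vec m) : nat := #|[pred i : 'I_m | nat_of_ord (tnth s i) != 0]|.

Definition meta_extendable m (S0 S1 S2 : {set vec m}) : Prop :=
  admissible S0 /\ admissible S1 /\ admissible S2 /\
  (forall s s', s \in S0 -> s' \in S1 :|: S2 -> weight s < weight s') /\
  (forall x y z, x \in S0 -> y \in S0 -> z \in S1 :|: S2 -> separated3 x y z) /\
  (forall x y z, x \in S0 -> y \in S1 -> z \in S2 -> separated3 x y z).

Definition block m r (v : vec (m * r)) (i : 'I_r) : vec m :=
  [tuple of mkseq (fun j => nth ord0 v (i * m + j)) m].

Definition selectS m (S0 S1 S2 : {set vec m}) (a : 'I_3) : {set vec m} :=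
  match nat_of_ord a with 0 => S0 | 1 => S1 | _ => S2 end.

Definition compose m r (T : {set vec r}) (S0 S1 S2 : {set vec m}) : {set vec (m * r)} :=
  [set v : vec (m * r) | [exists t in T,
     [forall i : 'I_r, block v i \in selectS S0 S1 S2 (tnth t i)]]].

(* Main.v *)
Require Import Defs.
From mathcomp Require Import all_boot.
From mathcomp Require Import zify.

Set Implicit Arguments. Unset Strict Implicit. Unset Printing Implicit Defensive.

Lemma good3_12 (a b c : 'I_3) : good3 a b c -> good3 b a c.
Proof.
case: a => [[|[|[|//]]] ?]; case: b => [[|[|[|//]]] ?]; case: c => [[|[|[|//]]] ?]; by [].
Qed.

Lemma good3_23 (a b c : 'I_3) : good3 a b c -> good3 a c b.
Proof.
case: a => [[|[|[|//]]] ?]; case: b => [[|[|[|//]]] ?]; case: c => [[|[|[|//]]] ?]; by [].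
Qed.

Lemma good3_0c0 (a b c : 'I_3) : (a == 0 :> nat) -> (b != 0 :> nat) -> (c == 0 :> nat) -> good3 a b c.
Proof.
case: a => [[|[|[|//]]] ?]; case: b => [[|[|[|//]]] ?]; case: c => [[|[|[|//]]] ?]; by [].
Qed.

Lemma good3_c00 (a b c : 'I_3) : (a != 0 :> nat) -> (b == 0 :> nat) -> (c == 0 :> nat) -> good3 a b c.
Proof.
case: a => [[|[|[|//]]] ?]; case: b => [[|[|[|//]]] ?]; case: c => [[|[|[|//]]] ?]; by [].
Qed.

Lemma sep12 m (x y z : vec m) : separated3 x y z -> separated3 y x z.
Proof. by case=> k H; exists k; apply: good3_12. Qed.

Lemma sep23 m (x y z : vec m) : separated3 x y z -> separated3 x z y.
Proof. by case=> k H; exists k; apply: good3_23. Qed.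

Lemma bidx_lt m r (i : 'I_r) (k : 'I_m) : i * m + k < m * r.
Proof. have := ltn_ord i; have := ltn_ord k; nia. Qed.

Definition bidx m r (i : 'I_r) (k : 'I_m) : 'I_(m * r) := Ordinal (bidx_lt i k).

Lemma blk_tnth m r (v : vec (m * r)) (i : 'I_r) (k : 'I_m) :
  tnth (block v i) k = tnth v (bidx i k).
Proof. by rewrite (tnth_nth ord0) /= nth_mkseq // (tnth_nth ord0). Qed.

Lemma sep_block m r (x y z : vec (m * r)) (i : 'I_r) :
  separated3 (block x i) (block y i) (block z i) -> separated3 x y z.
Proof. by case=> k H; exists (bidx i k); rewrite -!blk_tnth. Qed.

Lemma ex_block m r (x y : vec (m * r)) (i : 'I_r) (P : 'I_3 -> 'I_3 -> bool) :
  (exists k : 'I_m, P (tnth (block x i) k) (tnth (block y i) k)) ->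
  exists k : 'I_(m * r), P (tnth x k) (tnth y k).
Proof. by case=> k H; exists (bidx i k); rewrite -!blk_tnth. Qed.

Lemma block_inj m r (v v' : vec (m * r)) :
  (forall i, block v i = block v' i) -> v = v'.
Proof.
move=> H; apply: eq_from_tnth => n.
have hn := ltn_ord n.
have m0 : 0 < m by case: m v v' H n hn => //.
have hi : n %/ m < r by rewrite ltn_divLR //; lia.
have hk : n %% m < m by rewrite ltn_mod.
have -> : n = bidx (Ordinal hi) (Ordinal hk) by apply: val_inj => /=; rewrite -divn_eq.
by rewrite -!blk_tnth H.
Qed.

Lemma weight_lt m (x y : vec m) : weight x < weight y ->
  exists k : 'I_m, (nat_of_ord (tnth x k) == 0) && (nat_of_ord (tnth y k) != 0).
Proof.
move=> H.
case: (pickP [pred k : 'I_m | (nat_of_ord (tnth x k) == 0) && (nat_of_ord (tnth y k) != 0)]) => [k hk|hn].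
  by exists k.
exfalso; move: H; rewrite ltnNge /weight; apply/negP/negPn.
apply: subset_leq_card; apply/subsetP => k; rewrite !inE => hy.
have := hn k; rewrite /= hy andbT => /negbT; by [].
Qed.

Section Main.
Variables (m : nat) (S0 S1 S2 : {set vec m}).
Hypothesis ME : meta_extendable S0 S1 S2.

Lemma sel_adm (a : 'I_3) : admissible (selectS S0 S1 S2 a).
Proof.
case: ME => [A0 [A1 [A2 _]]].
by case: a => [[|[|[|//]]] ?].
Qed.

Lemma sel_nz (a : 'I_3) x : x \in selectS S0 S1 S2 a -> nat_of_ord a != 0 -> x \in S1 :|: S2.
Proof. by case: a => [[|[|[|//]]] ?] //= hx _; rewrite inE hx ?orbT. Qed.

Lemma sel_0 (a : 'I_3) x : x \in selectS S0 S1 S2 a -> nat_of_ord a == 0 -> x \in S0.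
Proof. by case: a => [[|[|[|//]]] ?]. Qed.

Lemma sel_sep (a b c : 'I_3) x y z : good3 a b c ->
  x \in selectS S0 S1 S2 a -> y \in selectS S0 S1 S2 b -> z \in selectS S0 S1 S2 c ->
  separated3 x y z.
Proof.
case: ME => [_ [_ [_ [_ [H2 H3]]]]].
have H2a : forall x y z, x \in S0 -> y \in S0 -> z \in S1 -> separated3 x y z.
  by move=> ? ? ? ? ? hz; apply: H2 => //; rewrite inE hz.
have H2b : forall x y z, x \in S0 -> y \in S0 -> z \in S2 -> separated3 x y z.
  by move=> ? ? ? ? ? hz; apply: H2 => //; rewrite inE hz orbT.
case: a => [[|[|[|//]]] ?]; case: b => [[|[|[|//]]] ?]; case: c => [[|[|[|//]]] ?];
 rewrite /selectS /= => G hx hy hz; try done;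
 first [ by apply: H3 | by apply: H2a | by apply: H2b
       | apply: sep12; first [ by apply: H3 | by apply: H2a | by apply: H2b
           | apply: sep23; first [ by apply: H3 | by apply: H2a | by apply: H2b
               | apply: sep12; first [ by apply: H3 | by apply: H2a | by apply: H2b]]]
       | apply: sep23; first [ by apply: H3 | by apply: H2a | by apply: H2b
           | apply: sep12; first [ by apply: H3 | by apply: H2a | by apply: H2b]]].
Qed.

End Main.

Lemma same_sep m (S : {set vec m}) x y z : admissible S ->
  x \in S -> y \in S -> z \in S -> x != y -> separated3 x y z.
Proof.
move=> [P Tr] hx hy hz xy.
case: (eqVneq z x) => [->|zx].
  have [[k /andP [h1 h2]] _] := P x y hx hy xy.
  by exists k; apply: good3_0c0.
case: (eqVneq z y) => [->|zy].
  have [_ [k /andP [h1 h2]]] := P x y hx hy xy.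
  by exists k; apply: good3_c00.
by apply: Tr => //; rewrite eq_sym.
Qed.

Theorem lemma3p6 (m r : nat) (S0 S1 S2 : {set vec m}) (T : {set vec r}) :
  meta_extendable S0 S1 S2 -> admissible T ->
  admissible (compose T S0 S1 S2).
Proof.
move=> ME AT.
have ME' := ME; case: ME' => [_ [_ [_ [HW _]]]].
case: AT => [TP TT].
split.
- move=> v v'; rewrite !inE => /existsP [t /andP [tT /forallP Hv]]
    /existsP [t' /andP [tT' /forallP Hv']] vv'.
  case: (eqVneq t t') => [et|tt'].
    subst t'.
    have [i hi] : exists i, block v i != block v' i.
      apply/existsP; apply: contraNT vv' => /existsPn H; apply/eqP; apply: block_inj => i.
      exact/eqP/negbNE/H.
    have [P _] := sel_adm ME (tnth t i).
    have [[k hk] [j hj]] := P _ _ (Hv i) (Hv' i) hi.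
    by split; [apply: (ex_block (i := i) (P := fun a b => (nat_of_ord a == 0) && (nat_of_ord b != 0))); exists k | apply: (ex_block (i := i) (P := fun a b => (nat_of_ord a != 0) && (nat_of_ord b == 0))); exists j].
  have [[i /andP [i1 i2]] [j /andP [j1 j2]]] := TP t t' tT tT' tt'.
  split.
    apply: (ex_block (i := i) (P := fun a b => (nat_of_ord a == 0) && (nat_of_ord b != 0))); apply: weight_lt; apply: HW.
      exact: sel_0 (Hv i) i1.
    exact: sel_nz (Hv' i) i2.
  have [k /andP [k1 k2]] : exists k, (nat_of_ord (tnth (block v' j) k) == 0) &&
        (nat_of_ord (tnth (block v j) k) != 0).
    apply: weight_lt; apply: HW.
      exact: sel_0 (Hv' j) j2.
    exact: sel_nz (Hv j) j1.
  by apply: (ex_block (i := j) (P := fun a b => (nat_of_ord a != 0) && (nat_of_ord b == 0))); exists k; rewrite k1 k2.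
- move=> v v' v''; rewrite !inE => /existsP [t /andP [tT /forallP Hv]]
    /existsP [t' /andP [tT' /forallP Hv']] /existsP [t'' /andP [tT'' /forallP Hv'']] vv' vv'' v'v''.
  case: (eqVneq t t') => [et|tt'].
    subst t'.
    case: (eqVneq t t'') => [et|tt''].
      subst t''.
      have [i hi] : exists i, block v i != block v' i.
        apply/existsP; apply: contraNT vv' => /existsPn H; apply/eqP; apply: block_inj => i.
        exact/eqP/negbNE/H.
      apply: (sep_block (i := i)); apply: (same_sep (sel_adm ME (tnth t i))) => //.
    have [[i /andP [i1 i2]] _] := TP t t'' tT tT'' tt''.
    case: ME => [_ [_ [_ [_ [H2 _]]]]].
    apply: (sep_block (i := i)); apply: H2.
    - exact: sel_0 (Hv i) i1.
    - exact: sel_0 (Hv' i) i1.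
    - exact: sel_nz (Hv'' i) i2.
  case: (eqVneq t t'') => [et|tt''].
    subst t''.
    have [[i /andP [i1 i2]] _] := TP t t' tT tT' tt'.
    case: ME => [_ [_ [_ [_ [H2 _]]]]].
    apply: (sep_block (i := i)); apply: sep23; apply: H2.
    - exact: sel_0 (Hv i) i1.
    - exact: sel_0 (Hv'' i) i1.
    - exact: sel_nz (Hv' i) i2.
  case: (eqVneq t' t'') => [et|t't''].
    subst t''.
    have [_ [i /andP [i2 i1]]] := TP t t' tT tT' tt'.
    case: ME => [_ [_ [_ [_ [H2 _]]]]].
    apply: (sep_block (i := i)); apply: sep12; apply: sep23; apply: H2.
    - exact: sel_0 (Hv' i) i1.
    - exact: sel_0 (Hv'' i) i1.
    - exact: sel_nz (Hv i) i2.
  have [i hi] := TT t t' t'' tT tT' tT'' tt' tt'' t't''.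
  apply: (sep_block (i := i)); exact: (@sel_sep _ _ _ _ ME _ _ _ _ _ _ hi (Hv i) (Hv' i) (Hv'' i)).
Qed.
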